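(* Let $\bm{\mu}\in X^{\mathcal{L}(\mathcal{T})}$ and let $d_s(\bm{\mu})$ and $\bm{w}^s(\bm{\mu})$ be computed by the recursive formula described in the context (for any admissible choices of $c^*(s)$ and of the arbitrary vectors). Then for every node $s\in S$, \[d_s(\bm{\mu})=\max_{\bm{w}\in\Delta_s}\inf_{\bm{\lambda}\in\mathrm{Alt}_s(\bm{\mu})}\sum_{\ell\in\mathcal{D}(s)}w_\ell d(\mu_\ell,\lambda_\ell),\] and $\bm{w}^s(\bm{\mu})$ attains this maximum.
   Context: $\mathcal{T}$ is a finite rooted tree with node set $S$, root $s_0$, children sets $\mathcal{C}(s)$, leaf set $\mathcal{L}(\mathcal{T})$ (nodes without children), and $\mathcal{D}(s)$ the set of leaves descending from $s$ ($\{s\}$ for a leaf). Internal nodes have labels $L(s)\in\{\text{MAX},\text{MIN}\}$. $X\subseteq\mathbb{R}$ is the mean-parameter set of a one-parameter exponential family, $d(x,y)$ the KL divergence between its members with means $x$ and $y$, $\theta\in X$ a threshold. For $\bm{\lambda}$ with coordinates indexed by (a superset of) $\mathcal{D}(s)$: $V_s(\bm{\lambda})=\lambda_s$ at a leaf, $\max_{c\in\mathcal{C}(s)}V_c(\bm{\lambda})$ if $L(s)=$MAX, $\min_{c}V_c(\bm{\lambda})$ if MIN; $a_s(\bm{\lambda})=$'win' iff $V_s(\bm{\lambda})\ge\theta$, else 'lose'. $\Delta_s=\{(w_\ell)_{\ell\in\mathcal{D}(s)}:w_\ell\ge0,\sum w_\ell=1\}$ and $\mathrm{Alt}_s(\bm{\mu})=\{\bm{\lambda}\in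 X^{\mathcal{D}(s)}:a_s(\bm{\lambda})\neq a_{s_0}(\bm{\mu})\}$. Recursive formula: let $a^*=a_{s_0}(\bm{\mu})$, and $P=$MAX, $Q=$MIN if $a^*=$'win', $P=$MIN, $Q=$MAX if $a^*=$'lose'. Bottom-up: for a leaf $s$: $w^s_s=1$; $d_s=d(\mu_s,\theta)$ if ($a^*=$'win' and $\mu_s\ge\theta$) or ($a^*=$'lose' and $\mu_s<\theta$), otherwise $d_s=0$. If $L(s)=P$: $d_s=\max_{c\in\mathcal{C}(s)}d_c$; choose $c^*(s)\in\arg\max_c d_c$; if $d_s>0$, $w^s_\ell=w^{c^*(s)}_\ell$ for $\ell\in\mathcal{D}(c^*(s))$ and $w^s_\ell=0$ for $\ell\in\mathcal{D}(c)$, $c\ne c^*(s)$. If $L(s)=Q$ and $d_c>0$ for all $c\in\mathcal{C}(s)$: $d_s=1/\sum_{c}(1/d_c)$ and $w^s_\ell=\frac{w^c_\ell/d_c}{\sum_{c'\in\mathcal{C}(s)}1/d_{c'}}$ for $\ell\in\mathcal{D}(c)$, $c\in\mathcal{C}(s)$. If $L(s)=Q$ and some $d_c=0$: $d_s=0$. For any internal $s$ with $d_s=0$, $\bm{w}^s$ is an arbitrary element of $\Delta_s$. (All $d_c,w^c$ are evaluated at $\bm{\mu}$.) *)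

(* Defs.v *)
From HB Require Import structures.
From mathcomp Require Import all_boot all_order all_algebra.
From mathcomp Require Import all_classical all_reals all_analysis.
Set Implicit Arguments. Unset Strict Implicit. Unset Printing Implicit Defensive.
Import Order.TTheory GRing.Theory Num.Theory.
Import numFieldNormedType.Exports.
Local Open Scope classical_set_scope.
Local Open Scope ring_scope.

(* A regular one-parameter exponential family is described by its
   log-partition function [b] on its natural parameter space [Th] (an open,
   nonempty interval); [b] is twice differentiable there with [b'' > 0]
   (non-degenerate family).  The mean of the member with natural parameter
   [t] is [b'(t)]; the mean-parameter set is X = b'(Th). *)
Definition expfam (R : realType) (Th : set R) (b : R -> R) : Prop :=
  [/\ open Th, Th !=set0,
      (forall x y z, Th x -> Th y -> x <= z <= y -> Th z) &
      [/\
      (forall t, Th t -> derivable b t 1),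
      (forall t, Th t -> derivable (derive1 b) t 1) &
      (forall t, Th t -> 0 < derive1 (derive1 b) t)]].

Definition meanset (R : realType) (Th : set R) (b : R -> R) : set R :=
  [set derive1 b t | t in Th].

Definition natpar (R : realType) (Th : set R) (b : R -> R) (x : R) : R :=
  xget 0 [set t | Th t /\ derive1 b t = x].

(* d(x,y) = KL( P_x || P_y ) between the members with means x and y:
   KL(P_{t1} || P_{t2}) = b(t2) - b(t1) - b'(t1) (t2 - t1). *)
Definition KL (R : realType) (Th : set R) (b : R -> R) (x y : R) : R :=
  let tx := natpar Th b x in let ty := natpar Th b y in
  b ty - b tx - x * (ty - tx).

(* Leaves carry a label in L (the coordinate of mu they refer to);
   internal nodes carry a label: true = MAX, false = MIN. *)
Inductive tree (L : Type) : Type :=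
| Leaf of L
| Node of bool & seq (tree L).

Arguments Leaf {L}.
Arguments Node {L}.

Fixpoint leaves (L : Type) (t : tree L) : seq L :=
  match t with
  | Leaf l => [:: l]
  | Node _ cs => flatten (map (@leaves L) cs)
  end.

Fixpoint wf_tree (L : Type) (t : tree L) : bool :=
  match t with
  | Leaf _ => true
  | Node _ cs => ~~ nilp cs && all (@wf_tree L) cs
  end.

Definition dtree (L : Type) : tree L := Node true [::].

Inductive subtree (L : Type) : tree L -> tree L -> Prop :=
| sub_refl t : subtree t t
| sub_child s b cs (i : nat) : (i < size cs)%N ->
    subtree s (nth (dtree L) cs i) -> subtree s (Node b cs).


Fixpoint Vval (R : realType) (L : Type) (t : tree L) (lam : L -> R) : R :=
  match t with
  | Leaf l => lam l
  | Node m cs =>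
      match map (fun c => Vval c lam) cs with
      | [::] => 0
      | v :: vs => foldr (fun x acc => if m then Num.max x acc else Num.min x acc) v vs
      end
  end.

Definition wins (R : realType) (L : Type) (theta : R) (t : tree L) (lam : L -> R) : bool :=
  theta <= Vval t lam.

Definition Delta (R : realType) (L : eqType) (s : tree L) : set (L -> R) :=
  [set w | (forall l, l \in leaves s -> 0 <= w l) /\ \sum_(l <- leaves s) w l = 1].

(* Alt_s(mu), with astar = a_{s0}(mu) *)
Definition Alt (R : realType) (L : eqType) (X : set R) (theta : R) (astar : bool)
  (s : tree L) : set (L -> R) :=
  [set lam | (forall l, l \in leaves s -> X (lam l)) /\ wins theta s lam != astar].

Definition inf_alt (R : realType) (L : eqType) (X : set R) (dist : R -> R -> R)
  (theta : R) (astar : bool) (mu : L -> R) (s : tree L) (w : L -> R) : \bar R :=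
  ereal_inf [set (\sum_(l <- leaves s) w l * dist (mu l) (lam l))%:E
            | lam in Alt X theta astar s].

(* [Rec s ds ws]: ds, ws are a possible output (d_s, w^s) of the recursion at
   node s; only the coordinates ws l with l in D(s) are specified.
   P = MAX iff astar = win, i.e. a node with label m is a P-node iff m = astar. *)
Section Recursion.
Variables (R : realType) (L : eqType) (dist : R -> R -> R) (mu : L -> R)
          (theta : R) (astar : bool).

Inductive Rec : tree L -> R -> (L -> R) -> Prop :=
| Rec_leaf l ds ws :
    ds = (if (theta <= mu l) == astar then dist (mu l) theta else 0) ->
    ws l = 1 ->
    Rec (Leaf l) ds ws
| Rec_P m cs dcs wcs ds ws (i : nat) :
    m = astar ->
    size dcs = size cs -> size wcs = size cs ->
    (forall j, (j < size cs)%N ->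
       Rec (nth (dtree L) cs j) (nth 0 dcs j) (nth (fun _ => 0) wcs j)) ->
    (* d_s = max_c d_c, attained at c*(s) = the i-th child *)
    (i < size cs)%N -> nth 0 dcs i = ds ->
    (forall j, (j < size cs)%N -> nth 0 dcs j <= ds) ->
    (if 0 < ds then
       (forall l, l \in leaves (nth (dtree L) cs i) -> ws l = nth (fun _ => 0) wcs i l) /\
       (forall j, (j < size cs)%N -> j != i ->
          forall l, l \in leaves (nth (dtree L) cs j) -> ws l = 0)
     else Delta (Node m cs) ws) ->
    Rec (Node m cs) ds ws
| Rec_Q m cs dcs wcs ds ws :
    m != astar ->
    size dcs = size cs -> size wcs = size cs ->
    (forall j, (j < size cs)%N ->
       Rec (nth (dtree L) cs j) (nth 0 dcs j) (nth (fun _ => 0) wcs j)) ->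
    (if all (fun x => 0 < x) dcs then
       ds = 1 / (\sum_(x <- dcs) 1 / x) /\
       (forall j, (j < size cs)%N -> forall l, l \in leaves (nth (dtree L) cs j) ->
          ws l = (nth (fun _ => 0) wcs j l / nth 0 dcs j) / (\sum_(x <- dcs) 1 / x))
     else ds = 0 /\ Delta (Node m cs) ws) ->
    Rec (Node m cs) ds ws.
End Recursion.

(* Main.v *)
Require Import Defs.
From HB Require Import structures.
From mathcomp Require Import all_boot all_order all_algebra.
From mathcomp Require Import all_classical all_reals all_analysis.
From mathcomp Require Import ring lra.
Import Order.TTheory GRing.Theory Num.Theory.
Import numFieldNormedType.Exports.
Local Open Scope classical_set_scope.
Local Open Scope ring_scope.
Section Trees.
Variable (L : Type).
Definition tree_ind2 (P : tree L -> Prop) (HL : forall l, P (Leaf l))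
  (HN : forall m cs, (forall j, (j < size cs)%N -> P (nth (dtree L) cs j)) -> P (Node m cs)) :
  forall t, P t :=
  fix F t := match t with
  | Leaf l => HL l
  | Node m cs => HN m cs
     ((fix G (cs : seq (tree L)) : forall j, (j < size cs)%N -> P (nth (dtree L) cs j) :=
        match cs with
        | [::] => fun j H => False_ind _ (Bool.diff_false_true H)
        | c :: cs' => fun j => match j with
                      | 0 => fun _ => F c
                      | j'.+1 => fun H => G cs' j' H end
        end) cs)
  end.
End Trees.

Section SeqFacts.
Variable T : eqType.
Lemma mem_flatten_nth (ss : seq (seq T)) k x :
  (k < size ss)%N -> x \in nth [::] ss k -> x \in flatten ss.
Proof.
elim: ss k => [|s ss IH] [|k] //= hk hx; rewrite mem_cat ?hx //.
by rewrite (IH k) ?orbT.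
Qed.

Lemma flatten_uniq_nth (ss : seq (seq T)) j :
  uniq (flatten ss) -> (j < size ss)%N -> uniq (nth [::] ss j).
Proof.
elim: ss j => [|s ss IH] [|j] //=; rewrite cat_uniq => /and3P[u1 _ u2] hj //.
exact: IH.
Qed.

Lemma flatten_disj (ss : seq (seq T)) j k x :
  uniq (flatten ss) -> (j < size ss)%N -> (k < size ss)%N ->
  x \in nth [::] ss j -> x \in nth [::] ss k -> j = k.
Proof.
elim: ss j k => [|s ss IH] [|j] [|k] //=; rewrite cat_uniq => /and3P[u1 hn u2] hj hk hx1 hx2.
- case/negP: hn; apply/hasP; exists x => //; exact: (@mem_flatten_nth ss k x).
- case/negP: hn; apply/hasP; exists x => //; exact: (@mem_flatten_nth ss j x).
- by rewrite (IH j k).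
Qed.
End SeqFacts.

Section TreeFacts.
Context {L : eqType}.
Implicit Types (cs : seq (tree L)).

Lemma leaves_node m cs : leaves (Node m cs) = flatten (map (@leaves L) cs).
Proof. by []. Qed.

Lemma nth_leaves cs j : (j < size cs)%N ->
  nth [::] (map (@leaves L) cs) j = leaves (nth (dtree L) cs j).
Proof. by move=> hj; rewrite (nth_map (dtree L)). Qed.

Lemma mem_child {m cs j l} : (j < size cs)%N -> l \in leaves (nth (dtree L) cs j) ->
  l \in leaves (Node m cs).
Proof.
move=> hj hl; rewrite leaves_node; apply: (@mem_flatten_nth _ _ j).
  by rewrite size_map.
by rewrite nth_leaves.
Qed.

Lemma uniq_child {m cs j} : uniq (leaves (Node m cs)) -> (j < size cs)%N ->
  uniq (leaves (nth (dtree L) cs j)).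
Proof.
move=> u hj; rewrite -nth_leaves //; apply: flatten_uniq_nth u _.
by rewrite size_map.
Qed.

Lemma disj_child {m cs j k l} : uniq (leaves (Node m cs)) -> (j < size cs)%N ->
  (k < size cs)%N -> l \in leaves (nth (dtree L) cs j) ->
  l \in leaves (nth (dtree L) cs k) -> j = k.
Proof.
move=> u hj hk h1 h2; apply: (@flatten_disj _ _ j k l u); rewrite ?size_map ?nth_leaves //.
Qed.

Lemma wf_child {m cs j} : wf_tree (Node m cs) -> (j < size cs)%N ->
  wf_tree (nth (dtree L) cs j).
Proof. by move=> /= /andP[_ /(all_nthP (dtree L)) H] hj; apply: H. Qed.

Lemma wf_size {m cs} : wf_tree (Node m cs) -> (0 < size cs)%N.
Proof. by case: cs. Qed.

Lemma find_child {m cs j l} : uniq (leaves (Node m cs)) -> (j < size cs)%N ->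
  l \in leaves (nth (dtree L) cs j) -> find (fun c => l \in leaves c) cs = j.
Proof.
move=> u hj hl.
have hh : has (fun c => l \in leaves c) cs by apply/(has_nthP (dtree L)); exists j.
have hk : (find (fun c => l \in leaves c) cs < size cs)%N by rewrite -has_find.
apply: (disj_child u hk hj _ hl).
exact: (nth_find (dtree L) hh).
Qed.

Lemma sum_node (R : realType) m cs (F : L -> R) :
  \sum_(l <- leaves (Node m cs)) F l =
  \sum_(j < size cs) \sum_(l <- leaves (nth (dtree L) cs j)) F l.
Proof.
rewrite leaves_node big_flatten /= big_map (big_nth (dtree L)) big_mkord.
by [].
Qed.

Lemma subtree_props (s T : tree L) : subtree s T -> wf_tree T -> uniq (leaves T) ->
  [/\ wf_tree s, uniq (leaves s) & {subset leaves s <= leaves T}].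
Proof.
elim=> [t|s' m cs i hi _ IH] wf u; first by split.
have [w1 u1 s1] := IH (wf_child wf hi) (uniq_child u hi).
split => // l hl; apply: (mem_child hi); exact: s1.
Qed.

Lemma Vval_local (R : realType) s (f g : L -> R) :
  (forall l, l \in leaves s -> f l = g l) -> Vval s f = Vval s g.
Proof.
elim/tree_ind2: s => [l|m cs IH] H /=; first by apply: H; rewrite /= inE.
have -> : map (fun c => Vval c f) cs = map (fun c => Vval c g) cs.
  apply: (@eq_from_nth _ 0); rewrite ?size_map // => j hj.
  rewrite !(nth_map (dtree L)) //; apply: IH => // l hl; apply: H.
  exact: (mem_child hj).
by [].
Qed.

Lemma foldr_max (R : realType) (th v : R) vs :
  (th <= foldr (fun x acc => Num.max x acc) v vs) = (th <= v) || has (fun x => th <= x) vs.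
Proof.
elim: vs => [|x vs IH] /=; first by rewrite orbF.
by rewrite le_max IH orbCA.
Qed.

Lemma foldr_min (R : realType) (th v : R) vs :
  (th <= foldr (fun x acc => Num.min x acc) v vs) = (th <= v) && all (fun x => th <= x) vs.
Proof.
elim: vs => [|x vs IH] /=; first by rewrite andbT.
by rewrite le_min IH andbCA.
Qed.

Lemma wins_node (R : realType) (th : R) m cs (lam : L -> R) : (0 < size cs)%N ->
  wins th (Node m cs) lam =
  if m then has (fun c => wins th c lam) cs else all (fun c => wins th c lam) cs.
Proof.
case: cs => [|c cs] // _; rewrite /wins /=.
case: m.
- by rewrite foldr_max has_map.
- by rewrite foldr_min all_map.
Qed.

Lemma alt_node (R : realType) (th : R) (A : bool) m cs (lam : L -> R) : (0 < size cs)%N ->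
  (wins th (Node m cs) lam != A) =
  if m == A then all (fun c => wins th c lam != A) cs
  else has (fun c => wins th c lam != A) cs.
Proof.
move=> hs; rewrite wins_node //.
by case: m; case: A; elim: cs {hs} => [|c cs IH] //=; case: (wins th c lam).
Qed.
End TreeFacts.

Lemma mem_node (L : eqType) m (cs : seq (tree L)) l : l \in leaves (Node m cs) ->
  exists2 j, (j < size cs)%N & l \in leaves (nth (dtree L) cs j).
Proof.
rewrite leaves_node; elim: cs => [|c cs IH] //=; rewrite mem_cat => /orP[h|h].
  by exists 0%N.
by have [j hj hl] := IH h; exists j.+1.
Qed.

Section Main.
Variables (R : realType) (L : eqType) (X : set R) (D : R -> R -> R) (mu : L -> R)
  (theta : R) (A : bool).
Hypothesis HD0 : forall x, D x x = 0.
Hypothesis HDge0 : forall x y, X x -> X y -> 0 <= D x y.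
Hypothesis Hlow : forall x y, X x -> X y -> (theta <= x) == A -> (theta <= y) != A ->
  D x theta <= D x y.
Hypothesis Hup : forall x eps, X x -> 0 < eps -> (theta <= x) == A ->
  exists y, [/\ X y, (theta <= y) != A & D x y <= D x theta + eps].

Definition cost (s : tree L) (w lam : L -> R) :=
  \sum_(l <- leaves s) w l * D (mu l) (lam l).

Definition Good (s : tree L) (ds : R) (ws : L -> R) :=
  wf_tree s -> uniq (leaves s) -> (forall l, l \in leaves s -> X (mu l)) ->
  [/\ Delta s ws,
     forall lam, Alt X theta A s lam -> ds <= cost s ws lam &
     forall w eps, (forall l, l \in leaves s -> 0 <= w l) -> 0 < eps ->
       exists2 lam, Alt X theta A s lam & cost s w lam <= ds * \sum_(l <- leaves s) w l + eps].

Lemma cost_ge0 s w lam : (forall l, l \in leaves s -> X (mu l)) ->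
  (forall l, l \in leaves s -> 0 <= w l) -> (forall l, l \in leaves s -> X (lam l)) ->
  0 <= cost s w lam.
Proof.
move=> Xm w0 Xl; rewrite /cost big_seq; apply: sumr_ge0 => l hl.
by apply: mulr_ge0; [apply: w0 | apply: HDge0; [apply: Xm | apply: Xl]].
Qed.

Lemma Good_leaf l ds ws :
  ds = (if (theta <= mu l) == A then D (mu l) theta else 0) -> ws l = 1 ->
  Good (Leaf l) ds ws.
Proof.
move=> -> wl _ _ Xm.
have Xl : X (mu l) by apply: Xm; rewrite /= inE.
split.
- split; last by rewrite /= big_seq1.
  by move=> l'; rewrite /= inE => /eqP ->; rewrite wl.
- move=> lam [Xlam /= nA]; rewrite /cost /= big_seq1 wl mul1r.
  have Xy : X (lam l) by apply: Xlam; rewrite /= inE.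
  case: ifP => h; first by apply: Hlow.
  exact: HDge0.
- move=> w eps w0 eps0; rewrite /cost /= !big_seq1.
  have W0 : 0 <= w l by apply: w0; rewrite /= inE.
  case: ifP => h.
  + have e0 : 0 < eps / (w l + 1) by apply: divr_gt0 => //; apply: ltr_wpDl.
    have [y [Xy ny Dy]] := Hup _ _ Xl e0 h.
    exists (fun _ => y); first by split => // l' _.
    have h1 : w l * D (mu l) y <= w l * (D (mu l) theta + eps / (w l + 1)).
      by apply: ler_wpM2l.
    rewrite /= big_seq1; apply: (le_trans h1); rewrite mulrDr mulrC lerD2l.
    rewrite mulrA ler_pdivrMr; last by apply: ltr_wpDl.
    by rewrite mulrDr mulr1 mulrC lerDl; apply: ltW.
  + exists mu.
      split; first by move=> l'; rewrite /= inE => /eqP ->.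
      by rewrite /wins /= h.
    by rewrite big_seq1 HD0 mulr0 mul0r add0r ltW.
Qed.

Lemma Good_P m cs dcs wcs ds ws i :
  m = A -> size dcs = size cs -> size wcs = size cs ->
  (forall j, (j < size cs)%N -> Good (nth (dtree L) cs j) (nth 0 dcs j) (nth (fun _ => 0) wcs j)) ->
  (i < size cs)%N -> nth 0 dcs i = ds ->
  (forall j, (j < size cs)%N -> nth 0 dcs j <= ds) ->
  (if 0 < ds then
       (forall l, l \in leaves (nth (dtree L) cs i) -> ws l = nth (fun _ => 0) wcs i l) /\
       (forall j, (j < size cs)%N -> j != i ->
          forall l, l \in leaves (nth (dtree L) cs j) -> ws l = 0)
     else Delta (Node m cs) ws) ->
  Good (Node m cs) ds ws.
Proof.
move=> mA _ _ IH hi dsi dle Hw wf u Xm.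
set n := size cs.
have n0 : (0 < n)%N := wf_size wf.
have IHj j (hj : (j < n)%N) := IH j hj (wf_child wf hj) (uniq_child u hj)
   (fun l hl => Xm l (mem_child hj hl)).
have Dws : Delta (Node m cs) ws.
  case: ifP Hw => [ds0 [H1 H2]|_ //].
  have [[Di1 Di2] _ _] := IHj i hi.
  split.
  - move=> l /mem_node [j hj hl]; case: (eqVneq j i) => [e|ne].
      by subst j; rewrite H1 //; apply: Di1.
    by rewrite (H2 j hj ne l hl).
  - rewrite sum_node (bigD1 (Ordinal hi)) //= [X in _ + X]big1 ?addr0.
      rewrite -Di2; apply: eq_big_seq => l hl; exact: H1.
    move=> j hj; rewrite big1_seq // => l /andP[_ hl]; apply: (H2 j) => //.
have costj j lam : (j < n)%N -> (forall l, l \in leaves (Node m cs) -> X (lam l)) ->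
    0 <= cost (nth (dtree L) cs j) ws lam.
  move=> hj Xl; apply: cost_ge0.
  - by move=> l hl; apply: Xm; exact: (mem_child hj).
  - by move=> l hl; case: Dws => + _; apply; exact: (mem_child hj).
  - by move=> l hl; apply: Xl; exact: (mem_child hj).
split => //.
- move=> lam [Xl alt].
  case: ifP Hw => [ds0 [H1 H2]|/negbT ds0 _]; last first.
    apply: (@le_trans _ _ 0); first by rewrite leNgt.
    by apply: cost_ge0 => //; case: Dws.
  have alti : Alt X theta A (nth (dtree L) cs i) lam.
    split; first by move=> l hl; apply: Xl; exact: (mem_child hi).
    move: alt; rewrite alt_node // mA eqxx => /(all_nthP (dtree L)); apply.
    exact: hi.
  have [_ Hl _] := IHj i hi.
  have := Hl lam alti; rewrite dsi => h.
  rewrite /cost sum_node (bigD1 (Ordinal hi)) //=.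
  have -> : \sum_(l <- leaves (nth (dtree L) cs i)) ws l * D (mu l) (lam l)
          = cost (nth (dtree L) cs i) (nth (fun _ => 0) wcs i) lam.
    by apply: eq_big_seq => l hl; rewrite H1.
  apply: (le_trans h); rewrite lerDl; apply: sumr_ge0 => j _.
  exact: costj.
- move=> w eps w0 eps0.
  have e0 : 0 < eps / n%:R by apply: divr_gt0 => //; rewrite ltr0n.
  have : forall j, exists lamj, (j < n)%N ->
      Alt X theta A (nth (dtree L) cs j) lamj /\
      cost (nth (dtree L) cs j) w lamj <=
        nth 0 dcs j * \sum_(l <- leaves (nth (dtree L) cs j)) w l + eps / n%:R.
    move=> j; case: (ltnP j n) => hj; last by exists mu.
    have [_ _ Hu] := IHj j hj.
    have [lamj h1 h2] := Hu w (eps / n%:R) (fun l hl => w0 l (mem_child hj hl)) e0.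
    by exists lamj.
  case/choice => f Hf.
  set lam := fun l => f (find (fun c => l \in leaves c) cs) l.
  have lamE j l : (j < n)%N -> l \in leaves (nth (dtree L) cs j) -> lam l = f j l.
    by move=> hj hl; rewrite /lam (find_child u hj hl).
  exists lam.
  + split.
    * move=> l /mem_node [j hj hl]; rewrite (lamE j l hj hl).
      by have [[Xf _] _] := Hf j hj; exact: Xf.
    * rewrite alt_node // mA eqxx; apply/(all_nthP (dtree L)) => j hj.
      have [[_ Wf] _] := Hf j hj.
      rewrite /wins (@Vval_local _ _ _ lam (f j)) //.
      by move=> l hl; exact: lamE.
  + rewrite /cost sum_node.
    have -> : \sum_(j < n) \sum_(l <- leaves (nth (dtree L) cs j)) w l * D (mu l) (lam l)
            = \sum_(j < n) cost (nth (dtree L) cs j) w (f j).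
      by apply: eq_bigr => j _; apply: eq_big_seq => l hl; rewrite (lamE j l).
    apply: le_trans; first by apply: ler_sum => j _; exact: (Hf j (ltn_ord j)).2.
    rewrite big_split /= sumr_const card_ord.
    have -> : eps / n%:R *+ n = eps by rewrite -mulr_natr divfK // pnatr_eq0 -lt0n.
    rewrite lerD2r (sum_node _ m cs) mulr_sumr; apply: ler_sum => j _.
    apply: ler_wpM2r; last exact: dle.
    by rewrite big_seq; apply: sumr_ge0 => l hl; apply: w0; exact: (mem_child (ltn_ord j)).
Qed.

Lemma Good_Q m cs dcs wcs ds ws :
  m != A -> size dcs = size cs -> size wcs = size cs ->
  (forall j, (j < size cs)%N -> Good (nth (dtree L) cs j) (nth 0 dcs j) (nth (fun _ => 0) wcs j)) ->
  (if all (fun x => 0 < x) dcs then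
       ds = 1 / (\sum_(x <- dcs) 1 / x) /\
       (forall j, (j < size cs)%N -> forall l, l \in leaves (nth (dtree L) cs j) ->
          ws l = (nth (fun _ => 0) wcs j l / nth 0 dcs j) / (\sum_(x <- dcs) 1 / x))
     else ds = 0 /\ Delta (Node m cs) ws) ->
  Good (Node m cs) ds ws.
Proof.
move=> mA sd sw IH Hw wf u Xm.
set n := size cs.
have n0 : (0 < n)%N := wf_size wf.
have IHj j (hj : (j < n)%N) := IH j hj (wf_child wf hj) (uniq_child u hj)
   (fun l hl => Xm l (mem_child hj hl)).
have altQ lam : (wins theta (Node m cs) lam != A) = has (fun c => wins theta c lam != A) cs.
  by rewrite alt_node // (negbTE mA).
set S := \sum_(x <- dcs) 1 / x.
have SE : S = \sum_(j < n) 1 / nth 0 dcs j by rewrite /S (big_nth 0) sd big_mkord.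
have upk : forall k, (k < n)%N ->
    forall w, (forall l, l \in leaves (Node m cs) -> 0 <= w l) ->
    nth 0 dcs k * \sum_(l <- leaves (nth (dtree L) cs k)) w l <=
       ds * \sum_(l <- leaves (Node m cs)) w l ->
    forall eps, 0 < eps ->
    exists2 lam, Alt X theta A (Node m cs) lam &
       cost (Node m cs) w lam <= ds * \sum_(l <- leaves (Node m cs)) w l + eps.
  move=> k hk w w0 hW eps eps0.
  have [_ _ Hu] := IHj k hk.
  have [lamk [Xk Ak] hc] := Hu w eps (fun l hl => w0 l (mem_child hk hl)) eps0.
  set lam := fun l => if l \in leaves (nth (dtree L) cs k) then lamk l else mu l.
  exists lam.
    split.
      move=> l hl; rewrite /lam; case: ifP => h; first by apply: Xk.
      exact: Xm.
    rewrite altQ; apply/(has_nthP (dtree L)); exists k => //.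
    rewrite /wins (@Vval_local _ _ _ lam lamk) // => l hl.
    by rewrite /lam hl.
  rewrite /cost (sum_node _ m cs) (bigD1 (Ordinal hk)) //= [X in _ + X]big1 ?addr0.
    have -> : \sum_(l <- leaves (nth (dtree L) cs k)) w l * D (mu l) (lam l)
       = cost (nth (dtree L) cs k) w lamk.
      by apply: eq_big_seq => l hl; rewrite /lam hl.
    apply: (le_trans hc); exact: (lerD hW (lexx eps)).
  move=> j hj; rewrite big1_seq // => l /andP[_ hl].
  have hj' : (j < n)%N := ltn_ord j.
  have -> : lam l = mu l.
    rewrite /lam; case: ifP => // h; exfalso.
    have e := disj_child u hj' hk hl h.
    by move: hj; rewrite -(inj_eq val_inj) /= e eqxx.
  by rewrite HD0 mulr0.
case: ifP Hw => [Hpos [dsE Hws]|Hneg [ds0 Dws]]; last first.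
  have [k hk nk] : exists2 k, (k < n)%N & ~~ (0 < nth 0 dcs k).
    have : has (predC (fun x => 0 < x)) dcs by rewrite has_predC Hneg.
    by move=> /(has_nthP 0) [k hk nk]; exists k => //; by rewrite /n -sd.
  split => //.
  - by move=> lam [Xl _]; rewrite ds0; apply: cost_ge0 => //; case: Dws.
  - move=> w eps w0 eps0; apply: (upk k hk) => //.
    rewrite ds0 mul0r; apply: mulr_le0_ge0; first by rewrite leNgt.
    by rewrite big_seq; apply: sumr_ge0 => l hl; apply: w0; exact: (mem_child hk).
have dpos j : (j < n)%N -> 0 < nth 0 dcs j.
  by move=> hj; apply: (all_nthP 0 Hpos); rewrite sd.
have S0 : 0 < S.
  rewrite SE (bigD1 (Ordinal n0)) //=.
  have h1 : 0 < 1 / nth 0 dcs 0 by apply: divr_gt0 => //; apply: dpos.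
  have h2 : 0 <= \sum_(i < n | i != Ordinal n0) 1 / nth 0 dcs i.
    by apply: sumr_ge0 => j _; apply: divr_ge0 => //; apply: ltW; apply: dpos.
  lra.
have cj j lam : (j < n)%N ->
    cost (nth (dtree L) cs j) ws lam = (1 / nth 0 dcs j / S) * cost (nth (dtree L) cs j) (nth (fun _ => 0) wcs j) lam.
  move=> hj; rewrite /cost mulr_sumr; apply: eq_big_seq => l hl; rewrite (Hws j) //.
  rewrite -/S; ring.
have Dws : Delta (Node m cs) ws.
  split.
  - move=> l /mem_node [j hj hl]; rewrite (Hws j) // -/S.
    have [[Dj1 _] _ _] := IHj j hj.
    by apply: divr_ge0; [apply: divr_ge0; [apply: Dj1|apply: ltW; apply: dpos] | apply: ltW].
  - rewrite (sum_node _ m cs).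
    have -> : \sum_(j < size cs) \sum_(l <- leaves (nth (dtree L) cs j)) ws l =
              \sum_(j < n) (1 / nth 0 dcs j / S).
      apply: eq_bigr => j _.
      have [[_ Dj2] _ _] := IHj j (ltn_ord j).
      transitivity (1 / nth 0 dcs j / S *
         \sum_(l <- leaves (nth (dtree L) cs j)) nth (fun _ => 0) wcs j l);
        last by rewrite Dj2 mulr1.
      rewrite mulr_sumr; apply: eq_big_seq => l hl.
      rewrite (Hws j) // -/S; ring.
    by rewrite -mulr_suml -SE divff // gt_eqF.
split => //.
- move=> lam [Xl alt].
  move: alt; rewrite altQ => /(has_nthP (dtree L)) [j hj aj].
  have altj : Alt X theta A (nth (dtree L) cs j) lam.
    by split => // l hl; apply: Xl; exact: (mem_child hj).
  have [_ Hl _] := IHj j hj.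
  have h := Hl lam altj.
  rewrite /cost (sum_node _ m cs) (bigD1 (Ordinal hj)) //=.
  have -> : \sum_(l <- leaves (nth (dtree L) cs j)) ws l * D (mu l) (lam l) = _ := cj j lam hj.
  have -> : ds = (1 / nth 0 dcs j / S) * nth 0 dcs j.
    rewrite dsE -/S; field; apply/andP; split; apply: lt0r_neq0 => //; exact: dpos.
  apply: le_trans (_ : 1 / nth 0 dcs j / S * cost (nth (dtree L) cs j) (nth (fun=> 0) wcs j) lam <= _).
    apply: ler_wpM2l => //; apply: divr_ge0; [apply: divr_ge0 => //; apply: ltW; exact: dpos | exact: ltW].
  rewrite lerDl; apply: sumr_ge0 => i _; apply: cost_ge0.
  - by move=> l hl; apply: Xm; exact: (mem_child (ltn_ord i)).
  - by move=> l hl; case: Dws => + _; apply; exact: (mem_child (ltn_ord i)).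
  - by move=> l hl; apply: Xl; exact: (mem_child (ltn_ord i)).
- move=> w eps w0 eps0.
  pose W := fun j => \sum_(l <- leaves (nth (dtree L) cs j)) w l.
  have Wge0 j : (j < n)%N -> 0 <= W j.
    by move=> hj; rewrite /W big_seq; apply: sumr_ge0 => l hl; apply: w0; exact: (mem_child hj).
  set Wt := \sum_(l <- leaves (Node m cs)) w l.
  have WtE : Wt = \sum_(j < n) W j by rewrite /Wt (sum_node _ m cs).
  case: (boolP [exists k : 'I_n, nth 0 dcs k * W k <= Wt / S]) => [/existsP [k hk]|/existsPn H].
    apply: (upk k (ltn_ord k)) => //.
    apply: (le_trans hk); rewrite -/Wt dsE -/S mulrC mul1r lexx //.
  exfalso.
  have H' (k : 'I_n) : Wt / S / nth 0 dcs k < W k.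
    have := H k; rewrite -ltNge => h.
    rewrite ltr_pdivrMr; [by rewrite [W k * _]mulrC | exact: dpos (ltn_ord k)].
  have : \sum_(k < n) Wt / S / nth 0 dcs k < \sum_(k < n) W k.
    apply: ltr_sum; last by move=> i _; exact: H'.
    by apply/hasP; exists (Ordinal n0) => //; exact: mem_index_enum.
  rewrite -WtE.
  have -> : \sum_(k < n) Wt / S / nth 0 dcs k = Wt / S * S.
    rewrite SE mulr_sumr; apply: eq_bigr => k _; ring.
  by rewrite divfK ?gt_eqF // ltxx.
Qed.

Lemma Good_all s ds ws : Rec D mu theta A s ds ws -> Good s ds ws.
Proof.
elim => [l ds' ws' h1 h2|m cs dcs wcs ds' ws' i h1 h2 h3 _ IH h4 h5 h6 h7
        |m cs dcs wcs ds' ws' h1 h2 h3 _ IH h4].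
- exact: Good_leaf.
- exact: (@Good_P m cs dcs wcs ds' ws' i h1 h2 h3 IH h4 h5 h6 h7).
- exact: (@Good_Q m cs dcs wcs ds' ws' h1 h2 h3 IH h4).
Qed.
End Main.

Section KLfacts.
Variables (R : realType) (Th : set R) (b : R -> R).
Hypothesis Hexp : expfam Th b.
Let g := derive1 b.

Lemma Th_conv {x y z} : Th x -> Th y -> x <= z <= y -> Th z.
Proof. by case: Hexp => _ _ H _; apply: H. Qed.

Lemma mvt_Th {f : R -> R} {a c} : (forall t, Th t -> derivable f t 1) ->
  Th a -> Th c -> a <= c ->
  exists2 xi, Th xi /\ a <= xi <= c & f c - f a = derive1 f xi * (c - a).
Proof.
move=> df Ta Tc ac.
have inT t : t \in `[a, c] -> Th t.
  by rewrite in_itv /= => h; exact: (Th_conv Ta Tc h).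
have H1 : forall x, x \in `]a, c[ -> is_derive x 1 f (derive1 f x).
  move=> x xin; rewrite derive1E; apply: derivableP; apply: df; apply: inT.
  by move: xin; rewrite !in_itv /= => /andP[/ltW -> /ltW ->].
have H2 : {within `[a, c], continuous f}.
  by apply: derivable_within_continuous => x /inT /df.
have [xi xiin E] := MVT_segment ac H1 H2.
exists xi => //; split; first by apply: inT.
by move: xiin; rewrite in_itv.
Qed.

Lemma db t : Th t -> derivable b t 1.
Proof. by case: Hexp => _ _ _ [H _ _]; apply: H. Qed.
Lemma dg t : Th t -> derivable g t 1.
Proof. by case: Hexp => _ _ _ [_ H _]; apply: H. Qed.
Lemma d2g t : Th t -> 0 < derive1 g t.
Proof. by case: Hexp => _ _ _ [_ _ H]; apply: H. Qed.

Lemma g_lt {a c} : Th a -> Th c -> a < c -> g a < g c.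
Proof.
move=> Ta Tc ac.
have [xi [Txi _] E] := mvt_Th dg Ta Tc (ltW ac).
rewrite -subr_gt0 E; apply: mulr_gt0; first exact: d2g.
by rewrite subr_gt0.
Qed.

Lemma g_le {a c} : Th a -> Th c -> (g a <= g c) = (a <= c).
Proof.
move=> Ta Tc; case: (ltgtP a c) => [ac|ca|->]; last by rewrite lexx.
- by rewrite ltW // g_lt.
- by apply/negbTE; rewrite -ltNge g_lt.
Qed.

Lemma g_inj a c : Th a -> Th c -> g a = g c -> a = c.
Proof.
move=> Ta Tc E; apply/eqP; rewrite eq_le -(g_le Ta Tc) -(g_le Tc Ta) E lexx //.
Qed.

Local Notation X := (meanset Th b).
Local Notation tp := (natpar Th b).

Lemma natparP {x} : X x -> Th (tp x) /\ g (tp x) = x.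
Proof.
move=> Xx; rewrite /natpar; apply: (@xgetPex _ 0 [set t | Th t /\ derive1 b t = x]).
by case: Xx => t Tt E; exists t.
Qed.

Lemma natpar_g t : Th t -> tp (g t) = t.
Proof.
move=> Tt; have [T1 E1] := @natparP (g t) (ex_intro2 _ _ t Tt erefl).
exact: g_inj E1.
Qed.

Lemma KL_id x : KL Th b x x = 0.
Proof. by rewrite /KL !subrr mulr0 subr0. Qed.

Lemma tp_le {x y} : X x -> X y -> x <= y -> tp x <= tp y.
Proof.
move=> Xx Xy; have [Tx Ex] := natparP Xx; have [Ty Ey] := natparP Xy.
by rewrite -(g_le Tx Ty) Ex Ey.
Qed.

Lemma KL_mono1 x y z : X x -> X y -> X z -> y <= z -> z <= x ->
  KL Th b x z <= KL Th b x y.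
Proof.
move=> Xx Xy Xz yz zx.
have [Tx Ex] := natparP Xx; have [Ty Ey] := natparP Xy; have [Tz Ez] := natparP Xz.
have tyz := tp_le Xy Xz yz.
have [xi [Txi /andP[h1 h2]] E] := mvt_Th db Ty Tz tyz.
rewrite /KL -subr_ge0.
have -> : b (tp y) - b (tp x) - x * (tp y - tp x) - (b (tp z) - b (tp x) - x * (tp z - tp x))
   = (x - g xi) * (tp z - tp y).
  have -> : b (tp y) = b (tp z) - g xi * (tp z - tp y) by rewrite -E; ring.
  ring.
apply: mulr_ge0; last by rewrite subr_ge0.
rewrite subr_ge0; apply: le_trans zx; rewrite -Ez g_le //.
Qed.

Lemma KL_mono2 x y z : X x -> X y -> X z -> x <= z -> z <= y ->
  KL Th b x z <= KL Th b x y.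
Proof.
move=> Xx Xy Xz xz zy.
have [Tx Ex] := natparP Xx; have [Ty Ey] := natparP Xy; have [Tz Ez] := natparP Xz.
have tzy := tp_le Xz Xy zy.
have [xi [Txi /andP[h1 h2]] E] := mvt_Th db Tz Ty tzy.
rewrite /KL -subr_ge0.
have -> : b (tp y) - b (tp x) - x * (tp y - tp x) - (b (tp z) - b (tp x) - x * (tp z - tp x))
   = (g xi - x) * (tp y - tp z).
  have -> : b (tp y) = b (tp z) + g xi * (tp y - tp z) by rewrite -E; ring.
  ring.
apply: mulr_ge0; last by rewrite subr_ge0.
rewrite subr_ge0; apply: (le_trans xz); rewrite -Ez g_le //.
Qed.

Lemma KL_ge0 x y : X x -> X y -> 0 <= KL Th b x y.
Proof.
move=> Xx Xy; rewrite -(KL_id x).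
case: (leP y x) => h.
- by apply: KL_mono1.
- by apply: KL_mono2 => //; apply: ltW.
Qed.

Lemma KL_approx {x theta eps} : X x -> X theta -> 0 < eps ->
  exists y, [/\ X y, y < theta & KL Th b x y <= KL Th b x theta + eps].
Proof.
move=> Xx Xth eps0.
have [Tx Ex] := natparP Xx; have [Tth Eth] := natparP Xth.
set tt := tp theta.
have : nbhs tt Th.
  by apply: open_nbhs_nbhs; split => //; case: Hexp.
move=> /nbhs_ballP [e /= e0 He].
have inball y : `|tt - y| < e -> Th y.
  by move=> h; apply: He; rewrite -ball_normE /ball_ /=.
set t0 := tt - e / 2.
have Tt0 : Th t0 by apply: inball; rewrite /t0 opprB addrC subrK ger0_norm; lra.
set M := `|g t0 - x|.
have M0 : 0 <= M by apply: normr_ge0.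
set del := Num.min (e / 2) (eps / (M + 1)).
have del0 : 0 < del by rewrite lt_min; apply/andP; split; [lra|apply: divr_gt0 => //; lra].
have dle : del <= e / 2 by rewrite ge_min lexx.
have dle2 : del <= eps / (M + 1) by rewrite ge_min lexx orbT.
set t := tt - del.
have Tt : Th t by apply: inball; rewrite /t opprB addrC subrK ger0_norm; lra.
have tt0 : t0 <= t by rewrite /t /t0; lra.
have ttt : t <= tt by rewrite /t; lra.
exists (g t); split.
- by exists t.
- by rewrite -Eth; apply: g_lt => //; rewrite -/tt /t; lra.
have [xi [Txi /andP[h1 h2]] E] := mvt_Th db Tt Tth ttt.
rewrite /KL /= natpar_g // -/tt -subr_ge0.
have -> : b tt - b (tp x) - x * (tt - tp x) + eps - (b t - b (tp x) - x * (t - tp x))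
   = eps - (x - g xi) * del.
  have -> : b tt = b t + g xi * (tt - t) by rewrite -E; ring.
  rewrite /t; ring.
rewrite subr_ge0.
have h3 : x - g xi <= M.
  have h6 : x - g t0 <= M by rewrite /M distrC; exact: ler_norm.
  have : g t0 <= g xi by rewrite g_le //; apply: le_trans h1.
  lra.
have h4 : (x - g xi) * del <= M * del by apply: ler_wpM2r => //; apply: ltW.
apply: le_trans h4 _.
have h5 : M * del <= M * (eps / (M + 1)) by apply: ler_wpM2l.
apply: le_trans h5 _.
rewrite mulrA ler_pdivrMr; last lra.
nra.
Qed.

Lemma KL_low (A : bool) x y theta : X x -> X y -> X theta ->
  (theta <= x) == A -> (theta <= y) != A -> KL Th b x theta <= KL Th b x y.
Proof.
move=> Xx Xy Xt; case: (leP theta x) => hx; case: (leP theta y) => hy; case: A => //= _ _.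
- by apply: KL_mono1 => //; apply: ltW.
- by apply: KL_mono2 => //; apply: ltW.
Qed.

Lemma KL_up (A : bool) x theta eps : X x -> X theta -> 0 < eps -> (theta <= x) == A ->
  exists y, [/\ X y, (theta <= y) != A & KL Th b x y <= KL Th b x theta + eps].
Proof.
move=> Xx Xt e0; case: A => hA.
- have [y [Xy yt hy]] := KL_approx Xx Xt e0.
  by exists y; split => //; rewrite leNgt yt.
- exists theta; split => //; first by rewrite lexx.
  by rewrite lerDl ltW.
Qed.
End KLfacts.

Theorem theorem2 (R : realType) (L : eqType) (Th : set R) (b : R -> R)
  (theta : R) (T : tree L) (mu : L -> R) :
  expfam Th b ->
  wf_tree T -> uniq (leaves T) ->
  meanset Th b theta ->
  (forall l, l \in leaves T -> meanset Th b (mu l)) ->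
  forall (s : tree L), subtree s T ->
  forall (ds : R) (ws : L -> R),
    Rec (KL Th b) mu theta (wins theta T mu) s ds ws ->
    [/\ ds%:E = ereal_sup [set inf_alt (meanset Th b) (KL Th b) theta
                                 (wins theta T mu) mu s w | w in Delta s],
        Delta s ws &
        inf_alt (meanset Th b) (KL Th b) theta (wins theta T mu) mu s ws = ds%:E].
Proof.
move=> Hexp wf u Xth Xmu s sub ds ws Hrec.
have [wfs us subs] := @subtree_props _ s T sub wf u.
have HD0 : forall x, KL Th b x x = 0 by move=> x; exact: KL_id.
have HDge0 : forall x y, meanset Th b x -> meanset Th b y -> 0 <= KL Th b x y.
  by move=> x y; exact: KL_ge0.
have Hlow : forall x y, meanset Th b x -> meanset Th b y ->
    (theta <= x) == wins theta T mu -> (theta <= y) != wins theta T mu ->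
    KL Th b x theta <= KL Th b x y.
  by move=> x y Xx Xy; exact: KL_low.
have Hup : forall x eps, meanset Th b x -> 0 < eps -> (theta <= x) == wins theta T mu ->
    exists y, [/\ meanset Th b y, (theta <= y) != wins theta T mu &
                  KL Th b x y <= KL Th b x theta + eps].
  by move=> x eps Xx e0; exact: KL_up.
have [Dws Hl Hu] := @Good_all R L (meanset Th b) (KL Th b) mu theta (wins theta T mu) HD0 HDge0 Hlow Hup s ds ws Hrec wfs us (fun l hl => Xmu l (subs l hl)).
have infle : forall w, (forall l, l \in leaves s -> 0 <= w l) ->
    (inf_alt (meanset Th b) (KL Th b) theta (wins theta T mu) mu s w <=
      (ds * \sum_(l <- leaves s) w l)%:E)%E.
  move=> w w0; apply/lee_addgt0Pr => e e0.
  have [lam alt hc] := Hu w e w0 e0.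
  apply: (@le_trans _ _ (cost R L (KL Th b) mu s w lam)%:E).
    by apply: ereal_inf_lbound; exists lam.
  by rewrite -EFinD lee_fin.
have infws : inf_alt (meanset Th b) (KL Th b) theta (wins theta T mu) mu s ws = ds%:E.
  apply/le_anti/andP; split.
    by have := infle ws (proj1 Dws); rewrite (proj2 Dws) mulr1.
  by apply/ereal_infP => y [lam alt <-]; rewrite lee_fin; exact: Hl.
split => //.
apply/le_anti/andP; split.
  by apply: ereal_sup_ubound; exists ws.
apply: ge_ereal_sup => y [w Dw <-].
by have := infle w (proj1 Dw); rewrite (proj2 Dw) mulr1.
Qed.
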